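(* Let $(i^*_k,j^*_k)$ and $\mu_k$, $k=1,\dots,n$, be a sequence of $k$-th order bottleneck edges and robustness margins, and let $\Pi^*$ be a sequential bottleneck optimising assignment for this sequence. Assume $\mu_k>0$ for all $k\in\{1,\dots,n\}$. Then $\Pi^*\in\mathcal P_{\mathcal A,\mathcal T}(\mathcal A\times\mathcal T)$, $w_{i^*_1,j^*_1}\ge w_{i^*_2,j^*_2}\ge\dots\ge w_{i^*_n,j^*_n}$, and $\Pi^*$ is the unique lexicographic optimiser in the following sense: for every $\Pi'\in\mathcal P_{\mathcal A,\mathcal T}(\mathcal A\times\mathcal T)$ with $\Pi'\ne\Pi^*$, letting $(w'_1,\dots,w'_n)$ be the weights $w_{i,j}$ of the $n$ pairs $(i,j)$ with $\pi'_{i,j}=1$ listed in non-increasing order, either $w_{i^*_1,j^*_1}<w'_1$, or there is $l\in\{2,\dots,n\}$ with $w_{i^*_k,j^*_k}=w'_k$ for all $k<l$ and $w_{i^*_l,j^*_l}<w'_l$. In particular, the sequence $(w_{i^*_1,j^*_1},\dots,w_{i^*_n,j^*_n})$ and the assignment $\Pi^*$ do not depend on the choices of the $k$-th order bottleneck edges.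
   Context: Let $\mathcal A$ be a finite set of agents with $|\mathcal A|=m>1$ and $\mathcal T$ a finite set of tasks with $m\ge|\mathcal T|=n\ge 1$. Let $\mathcal W=\{w_{i,j}\ge 0:(i,j)\in\mathcal A\times\mathcal T\}$ be given assignment weights. An assignment is a family $\Pi=\{\pi_{i,j}\in\{0,1\}:(i,j)\in\mathcal A\times\mathcal T\}$. For $\bar{\mathcal A}\subseteq\mathcal A$, $\bar{\mathcal T}\subseteq\mathcal T$ and $\hat{\mathcal E}\subseteq\bar{\mathcal A}\times\bar{\mathcal T}$, $\mathcal P_{\bar{\mathcal A},\bar{\mathcal T}}(\hat{\mathcal E})$ is the set of assignments $\Pi$ with $\sum_{i:(i,j)\in\hat{\mathcal E}}\pi_{i,j}=1$ for every $j\in\bar{\mathcal T}$ and $\sum_{j:(i,j)\in\hat{\mathcal E}}\pi_{i,j}\le 1$ for every $i\in\bar{\mathcal A}$. Define $b(\Pi,\hat{\mathcal E},\mathcal W)=\max_{(i,j)\in\hat{\mathcal E}}\pi_{i,j}w_{i,j}$; $B_{\bar{\mathcal A},\bar{\mathcal T}}(\hat{\mathcal E},\mathcal W)=\min_{\Pi\in\mathcal P_{\bar{\mathcal A},\bar{\mathcal T}}(\hat{\mathcal E})}b(\Pi,\hat{\mathcal E},\mathcal W)$ (with $\min\emptyset=+\infty$); $\mathcal B_{\bar{\mathcal A},\bar{\mathcal T}}(\hat{\mathcal E},\mathcal W)$ the corresponding set of minimisers (bottleneck minimising assignments); and $E_{\bar{\mathcal A},\bar{\mathcal T}}(\hat{\mathcal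 E},\mathcal W)=\{(i,j)\in\hat{\mathcal E}: w_{i,j}=B_{\bar{\mathcal A},\bar{\mathcal T}}(\hat{\mathcal E},\mathcal W)\}$. For $\bar{\mathcal E}=\bar{\mathcal A}\times\bar{\mathcal T}$ with $|\bar{\mathcal E}|>1$: $e_{\bar{\mathcal A},\bar{\mathcal T}}(\mathcal W)=\arg\max_{(i,j)\in E_{\bar{\mathcal A},\bar{\mathcal T}}(\bar{\mathcal E},\mathcal W)}B_{\bar{\mathcal A},\bar{\mathcal T}}(\bar{\mathcal E}\setminus\{(i,j)\},\mathcal W)$ (maximum-margin bottleneck edges) and $r_{\bar{\mathcal A},\bar{\mathcal T}}(\mathcal W)=\max_{(i,j)\in E_{\bar{\mathcal A},\bar{\mathcal T}}(\bar{\mathcal E},\mathcal W)}\big(B_{\bar{\mathcal A},\bar{\mathcal T}}(\bar{\mathcal E}\setminus\{(i,j)\},\mathcal W)-w_{i,j}\big)$ (robustness margin); if $|\bar{\mathcal E}|=1$, $e_{\bar{\mathcal A},\bar{\mathcal T}}(\mathcal W)=\bar{\mathcal E}$ and $r_{\bar{\mathcal A},\bar{\mathcal T}}(\mathcal W)=\infty$. Sequential bottleneck assignment: set $\bar{\mathcal A}_1=\mathcal A$, $\bar{\mathcal T}_1=\mathcal T$, and for $k=1,\dots,n$ let $\bar{\mathcal E}_k=\bar{\mathcal A}_k\times\bar{\mathcal T}_k$, choose a $k$-th order bottleneck edge $(i^*_k,j^*_k)\in e_{\bar{\mathcal A}_k,\bar{\mathcal T}_k}(\mathcal W)$ (any choice),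 let $\mu_k=r_{\bar{\mathcal A}_k,\bar{\mathcal T}_k}(\mathcal W)$ be the $k$-th order robustness margin, and set $\bar{\mathcal A}_{k+1}=\bar{\mathcal A}_k\setminus\{i^*_k\}$, $\bar{\mathcal T}_{k+1}=\bar{\mathcal T}_k\setminus\{j^*_k\}$. Given these choices, an assignment $\Pi^*$ is sequential bottleneck optimising if $\Pi^*\in\mathcal B_{\bar{\mathcal A}_k,\bar{\mathcal T}_k}(\bar{\mathcal E}_k,\mathcal W)$ for every $k\in\{1,\dots,n\}$. *)

(* Defs.v *)
From HB Require Import structures.
From mathcomp Require Import all_boot all_order all_algebra.
Set Implicit Arguments. Unset Strict Implicit. Unset Printing Implicit Defensive.
Import Order.TTheory GRing.Theory Num.Theory.

Section Bottleneck.
Variables (R : realFieldType) (A T : finType) (w : A * T -> R).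
Local Open Scope ring_scope.

(* Extended values: [None] stands for +infinity, [Some a] for the real a. *)
Definition ole (x y : option R) : bool :=
  match x, y with
  | _, None => true
  | None, Some _ => false
  | Some a, Some b => a <= b
  end.
Definition olt (x y : option R) : bool :=
  match x, y with
  | Some a, Some b => a < b
  | Some _, None => true
  | None, _ => false
  end.
Definition omin (x y : option R) : option R :=
  match x, y with
  | None, z => z
  | z, None => z
  | Some a, Some b => Some (Num.min a b)
  end.
Definition omax (x y : option R) : option R :=
  match x, y with
  | None, _ => None
  | _, None => None
  | Some a, Some b => Some (Num.max a b)
  end.
Definition osub (x : option R) (c : R) : option R :=
  match x with None => None | Some a => Some (a - c) end.

Definition assignment := {ffun A * T -> bool}.

Definition inP (Ab : {set A}) (Tb : {set T}) (E : {set A * T}) (P : assignment)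
  : bool :=
  [forall j in Tb, (\sum_(i | (i, j) \in E) (P (i, j) : nat))%N == 1%N] &&
  [forall i in Ab, (\sum_(j | (i, j) \in E) (P (i, j) : nat) <= 1)%N].

(* b(Pi, E, W) = max_{(i,j) in E} pi_{i,j} w_{i,j}  (weights are >= 0) *)
Definition bval (E : {set A * T}) (P : assignment) : R :=
  \big[Num.max/0]_(x in E) (if P x then w x else 0).

Definition Bval (Ab : {set A}) (Tb : {set T}) (E : {set A * T}) : option R :=
  \big[omin/None]_(P | inP Ab Tb E P) Some (bval E P).

Definition Bset (Ab : {set A}) (Tb : {set T}) (E : {set A * T})
  : {set assignment} :=
  [set P | inP Ab Tb E P && (Some (bval E P) == Bval Ab Tb E)].

Definition Eset (Ab : {set A}) (Tb : {set T}) (E : {set A * T}) : {set A * T} :=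
  [set x in E | Some (w x) == Bval Ab Tb E].

Definition eset (Ab : {set A}) (Tb : {set T}) : {set A * T} :=
  let Eb := setX Ab Tb in
  if #|Eb| == 1%N then Eb
  else [set x in Eset Ab Tb Eb |
          [forall y in Eset Ab Tb Eb,
             ole (Bval Ab Tb (Eb :\ y)) (Bval Ab Tb (Eb :\ x))]].

(* r_{Ab,Tb}(W): robustness margin (None = +oo).  The neutral element [Some 0]
   of the max is harmless: every term is >= 0. *)
Definition rmargin (Ab : {set A}) (Tb : {set T}) : option R :=
  let Eb := setX Ab Tb in
  if #|Eb| == 1%N then None
  else \big[omax/Some 0]_(x in Eset Ab Tb Eb) osub (Bval Ab Tb (Eb :\ x)) (w x).

(* The sequential construction, 0-indexed: step k uses Abar k, Tbar k,
   and chooses edge ed k. *)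
Fixpoint Abar (ed : nat -> A * T) (k : nat) : {set A} :=
  match k with 0 => setT | k'.+1 => Abar ed k' :\ (ed k').1 end.
Fixpoint Tbar (ed : nat -> A * T) (k : nat) : {set T} :=
  match k with 0 => setT | k'.+1 => Tbar ed k' :\ (ed k').2 end.

Definition valid_choices (ed : nat -> A * T) : Prop :=
  forall k, (k < #|T|)%N -> ed k \in eset (Abar ed k) (Tbar ed k).

Definition margins_pos (ed : nat -> A * T) : Prop :=
  forall k, (k < #|T|)%N -> olt (Some 0) (rmargin (Abar ed k) (Tbar ed k)).

Definition seq_bottleneck_opt (ed : nat -> A * T) (P : assignment) : Prop :=
  forall k, (k < #|T|)%N ->
    P \in Bset (Abar ed k) (Tbar ed k) (setX (Abar ed k) (Tbar ed k)).

Definition sorted_weights (P : assignment) : seq R :=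
  sort (fun a b => b <= a) [seq w x | x <- enum [set x | P x]].

End Bottleneck.

(* Main.v *)
Require Import Defs.
From HB Require Import structures.
From mathcomp Require Import all_boot all_order all_algebra.
Import Order.TTheory GRing.Theory Num.Theory.
Set Implicit Arguments. Unset Strict Implicit. Unset Printing Implicit Defensive.

Section Gen.
Variable R : realFieldType.
Local Open Scope ring_scope.
Implicit Types x y z : option R.

Lemma ole_refl x : ole x x.
Proof. by case: x => //= a; rewrite lexx. Qed.

Lemma ole_trans x y z : ole x y -> ole y z -> ole x z.
Proof. by case: x; case: y; case: z => //= a b c; apply: le_trans. Qed.

Lemma olt_ole_trans x y z : olt x y -> ole y z -> olt x z.
Proof. by case: x; case: y; case: z => //= a b c; apply: lt_le_trans. Qed.

Lemma olt_oleF x y : olt x y -> ole y x -> False.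
Proof. by case: x; case: y => //= a b h1 h2; have := lt_le_trans h1 h2; rewrite ltxx. Qed.

Lemma omin_lel x y : ole (omin x y) x.
Proof. by case: x; case: y => //= a b; rewrite ?lexx // ge_min lexx. Qed.

Lemma omin_ler x y : ole (omin x y) y.
Proof. by case: x; case: y => //= a b; rewrite ?lexx // ge_min lexx orbT. Qed.

Lemma big_omin_le (I : eqType) (r : seq I) (p : pred I) (F : I -> option R) a :
  a \in r -> p a -> ole (\big[@omin R/None]_(i <- r | p i) F i) (F a).
Proof.
elim: r => // b r IH; rewrite in_cons big_cons => /orP [/eqP <-|ar] pa.
  by rewrite pa; apply: omin_lel.
case: (p b); last exact: IH.
exact: ole_trans (omin_ler _ _) (IH ar pa).
Qed.

Lemma big_omax_pos (I : finType) (S : pred I) (F : I -> option R) :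
  olt (Some 0) (\big[@omax R/Some 0]_(i in S) F i) ->
  exists2 i, i \in S & olt (Some 0) (F i).
Proof.
case: (pickP (fun i => (i \in S) && olt (Some 0) (F i))) => [i /andP[h1 h2]|none].
  by exists i.
move=> hpos; exfalso; apply: (olt_oleF hpos).
apply: (big_ind (fun v => ole v (Some 0))).
- by rewrite /= lexx.
- by move=> [a|] [b|] //= ha hb; rewrite ge_max ha hb.
- move=> i iS; have := none i; rewrite iS /=.
  by case: (F i) => //= a; rewrite leNgt => ->.
Qed.

Lemma big_max_ge (I : eqType) (r : seq I) (p : pred I) (F : I -> R) a :
  a \in r -> p a -> F a <= \big[Num.max/0]_(i <- r | p i) F i.
Proof.
elim: r => // b r IH; rewrite in_cons big_cons => /orP [/eqP <-|ar] pa.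
  by rewrite pa le_max lexx.
case: (p b); last exact: IH.
by rewrite le_max (IH ar pa) orbT.
Qed.

Lemma big_max_le (I : eqType) (r : seq I) (p : pred I) (F : I -> R) c :
  0 <= c -> (forall i, p i -> F i <= c) -> \big[Num.max/0]_(i <- r | p i) F i <= c.
Proof.
move=> c0 hF; apply: (big_ind (fun v => v <= c)) => //.
by move=> u v hu hv; rewrite ge_max hu hv.
Qed.

Lemma big_max_ge0 (I : eqType) (r : seq I) (p : pred I) (F : I -> R) :
  0 <= \big[Num.max/0]_(i <- r | p i) F i.
Proof.
elim: r => [|b r IH]; first by rewrite big_nil.
by rewrite big_cons; case: (p b) => //; rewrite le_max IH orbT.
Qed.

End Gen.

Section Sums.
Variable I : finType.
Implicit Types p f : pred I.

Lemma sum_eq1 p f a : p a -> f a -> (forall b, p b -> f b -> b = a) ->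
  (\sum_(i | p i) (f i : nat) = 1)%N.
Proof.
move=> pa fa u; rewrite (bigD1 a) //= fa big1 // => i /andP[pi nia].
by case fi: (f i) => //; rewrite (u i pi fi) eqxx in nia.
Qed.

Lemma sum_le1 p f : (forall a b, p a -> f a -> p b -> f b -> a = b) ->
  (\sum_(i | p i) (f i : nat) <= 1)%N.
Proof.
move=> u; case: (pickP (fun i => p i && f i)) => [a /andP[pa fa]|none].
  by rewrite (@sum_eq1 p f a) // => b pb fb; apply: u.
by rewrite big1 // => i pi; have := none i; rewrite pi /=; case: (f i).
Qed.

Lemma sum1_ex p f : (\sum_(i | p i) (f i : nat) = 1)%N -> exists a, p a /\ f a.
Proof.
case: (pickP (fun i => p i && f i)) => [a /andP[pa fa]|none]; first by exists a.
by rewrite big1 // => i pi; have := none i; rewrite pi /=; case: (f i).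
Qed.

Lemma sumle1_uniq p f a b : (\sum_(i | p i) (f i : nat) <= 1)%N ->
  p a -> f a -> p b -> f b -> a = b.
Proof.
move=> hs pa fa pb fb; case: (eqVneq a b) => // nab; exfalso.
move: hs; rewrite (bigD1 a) //= (bigD1 b) /=; last by rewrite pb eq_sym nab.
by rewrite fa fb.
Qed.
End Sums.

Section Main.
Variables (R : realFieldType) (A T : finType) (w : A * T -> R).
Hypothesis hw : forall x, (0 <= w x)%R.
Variable ed : nat -> A * T.
Hypotheses (hchoice : valid_choices w ed) (hmu : margins_pos w ed).
Local Open Scope ring_scope.
Local Notation n := #|T|.
Local Notation Ab := (Abar ed).
Local Notation Tb := (Tbar ed).
Local Notation E k := (setX (Abar ed k) (Tbar ed k)).

Lemma memX (S1 : {set A}) (S2 : {set T}) (x : A * T) :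
  (x \in setX S1 S2) = (x.1 \in S1) && (x.2 \in S2).
Proof. by case: x => a b; rewrite in_setX. Qed.

Lemma Tb_sub j k : (j <= k)%N -> Tb k \subset Tb j.
Proof.
elim: k => [|k IH]; first by rewrite leqn0 => /eqP ->.
rewrite leq_eqVlt => /orP [/eqP -> //| ]; rewrite ltnS => /IH h.
exact: subset_trans (subD1set _ _) h.
Qed.

Lemma Ab_sub j k : (j <= k)%N -> Ab k \subset Ab j.
Proof.
elim: k => [|k IH]; first by rewrite leqn0 => /eqP ->.
rewrite leq_eqVlt => /orP [/eqP -> //| ]; rewrite ltnS => /IH h.
exact: subset_trans (subD1set _ _) h.
Qed.

Lemma E_sub k : E k.+1 \subset E k.
Proof. by apply: setXS; apply: subD1set. Qed.

Lemma ed_in k : (k < n)%N -> ed k \in E k.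
Proof.
move/hchoice; rewrite /eset; case: ifP => _ //.
by rewrite inE => /andP[]; rewrite /Eset inE => /andP[].
Qed.

Lemma Tb_out m k : (m < k)%N -> (ed m).2 \notin Tb k.
Proof.
move=> mk; apply/negP => /(subsetP (Tb_sub mk)) /=.
by rewrite in_setD1 eqxx.
Qed.

Lemma ed_notin m k : (m < k)%N -> ed m \notin E k.
Proof. by move=> mk; rewrite memX (negbTE (Tb_out mk)) andbF. Qed.

Lemma col_inj j k : (j < n)%N -> (k < n)%N -> (ed j).2 = (ed k).2 -> j = k.
Proof.
move=> jn kn e; case: (ltngtP j k) => // h.
- by have := ed_in kn; rewrite memX -e (negbTE (Tb_out h)) andbF.
- by have := ed_in jn; rewrite memX e (negbTE (Tb_out h)) andbF.
Qed.

Lemma notinA i k : i \notin Ab k -> exists2 m, (m < k)%N & (ed m).1 = i.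
Proof.
elim: k => [|k IH] /=; first by rewrite in_setT.
rewrite in_setD1 negb_and negbK => /orP [/eqP ->|/IH [m mk e]].
  by exists k.
by exists m => //; apply: ltnW.
Qed.

Lemma notinT j k : j \notin Tb k -> exists2 m, (m < k)%N & (ed m).2 = j.
Proof.
elim: k => [|k IH] /=; first by rewrite in_setT.
rewrite in_setD1 negb_and negbK => /orP [/eqP ->|/IH [m mk e]].
  by exists k.
by exists m => //; apply: ltnW.
Qed.

Lemma cardTb k : (k <= n)%N -> #|Tb k| = (n - k)%N.
Proof.
elim: k => [|k IH] hk; first by rewrite /= cardsT subn0.
have kn : (k < n)%N := hk.
have := ed_in kn; rewrite memX => /andP[_ h].
have := cardsD1 (ed k).2 (Tb k); rewrite h (IH (ltnW hk)) /=.
by move=> e; rewrite subnS e.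
Qed.

Lemma cover j : exists2 k, (k < n)%N & (ed k).2 = j.
Proof.
apply: notinT.
have h0 : #|Tb n| = 0%N by rewrite (cardTb (leqnn n)) subnn.
by rewrite (cards0_eq h0) in_set0.
Qed.

Definition full (P : assignment A T) := inP [set: A] [set: T] (setX [set: A] [set: T]) P.

Lemma full_col P j : full P -> exists i, P (i, j).
Proof.
case/andP => /forallP /(_ j); rewrite in_setT /= => /eqP /sum1_ex [i [_ h]] _.
by exists i.
Qed.

Lemma full_coluniq P i1 i2 j : full P -> P (i1, j) -> P (i2, j) -> i1 = i2.
Proof.
case/andP => /forallP /(_ j); rewrite in_setT /= => /eqP h _ h1 h2.
have hp : forall i, (i, j) \in setX [set: A] [set: T] by move=> i; rewrite in_setX !in_setT.
have h' := eq_leq h.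
exact: (sumle1_uniq (p := fun i => (i, j) \in setX [set: A] [set: T])
   (f := fun i => P (i, j)) h' (hp i1) h1 (hp i2) h2).
Qed.

Lemma full_rowuniq P i j1 j2 : full P -> P (i, j1) -> P (i, j2) -> j1 = j2.
Proof.
case/andP => _ /forallP /(_ i); rewrite in_setT /= => h h1 h2.
have hp : forall j, (i, j) \in setX [set: A] [set: T] by move=> j; rewrite in_setX !in_setT.
exact: (sumle1_uniq (p := fun j => (i, j) \in setX [set: A] [set: T])
   (f := fun j => P (i, j)) h (hp j1) h1 (hp j2) h2).
Qed.


Lemma bval_ge0 (E0 : {set A * T}) (P : assignment A T) : 0 <= bval w E0 P.
Proof. exact: big_max_ge0. Qed.

Lemma term_ge0 (P : assignment A T) x : 0 <= (if P x then w x else 0).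
Proof. by case: (P x). Qed.

Lemma bval_term (E0 : {set A * T}) (P : assignment A T) x : x \in E0 -> (if P x then w x else 0) <= bval w E0 P.
Proof. by move=> xE; apply: big_max_ge => //; apply: mem_index_enum. Qed.

Lemma bval_sub (E1 E2 : {set A * T}) (P : assignment A T) : E1 \subset E2 -> bval w E1 P <= bval w E2 P.
Proof.
move=> sE; apply: big_max_le; first exact: bval_ge0.
by move=> x xE; apply: bval_term; apply: (subsetP sE).
Qed.

Lemma Bval_le (Ab0 : {set A}) (Tb0 : {set T}) (E0 : {set A * T}) (P : assignment A T) : inP Ab0 Tb0 E0 P -> ole (Bval w Ab0 Tb0 E0) (Some (bval w E0 P)).
Proof.
move=> h.
exact: (@big_omin_le R _ (index_enum _) (fun P => inP Ab0 Tb0 E0 P)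
   (fun P => Some (bval w E0 P)) P (mem_index_enum _) h).
Qed.

Lemma sum_del (I : finType) (p q f : pred I) :
  (forall i, p i != q i -> ~~ f i) ->
  (\sum_(i | p i) (f i : nat) = \sum_(i | q i) (f i : nat))%N.
Proof.
move=> h; rewrite big_mkcond [RHS]big_mkcond; apply: eq_bigr => i _.
case: (eqVneq (p i) (q i)) => [-> //|/h /negbTE ->].
by case: (p i); case: (q i).
Qed.

Lemma inP_del (Ab0 : {set A}) (Tb0 : {set T}) (E0 : {set A * T}) (P : assignment A T) e :
  ~~ P e -> inP Ab0 Tb0 E0 P -> inP Ab0 Tb0 (E0 :\ e) P.
Proof.
move=> Pe /andP [/forallP hc /forallP hr]; apply/andP; split.
- apply/forallP => j; apply/implyP => jT; move: (hc j); rewrite jT /= => /eqP h.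
  apply/eqP; rewrite -h; apply: sum_del => i; rewrite in_setD1.
  by case: (eqVneq (i, j) e) => [->|] /=; [move=> _ | rewrite eqxx].
- apply/forallP => i; apply/implyP => iA; move: (hr i); rewrite iA /= => h.
  apply: leq_trans h; apply/eq_leq; apply: sum_del => j; rewrite in_setD1.
  by case: (eqVneq (i, j) e) => [->|] /=; [move=> _ | rewrite eqxx].
Qed.

Lemma must_use k (P : assignment A T) : (k < n)%N -> inP (Ab k) (Tb k) (E k) P ->
  ole (Some (bval w (E k) P)) (Bval w (Ab k) (Tb k) (E k)) -> P (ed k).
Proof.
move=> kn hin hle; have ek := ed_in kn.
move: (hchoice kn) (hmu kn); rewrite /eset /rmargin.
case: ifP => [/cards1P [x Ex] _ _ | c1 he hr].
  have exk : x = ed k by move: ek; rewrite Ex in_set1 => /eqP.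
  move: ek; rewrite memX => /andP [_ jT].
  case/andP: hin => /forallP /(_ (ed k).2); rewrite jT /= => /eqP /sum1_ex [i []].
  by rewrite Ex in_set1 exk => /eqP ->.
move: he; rewrite inE => /andP [heE /forallP hmax].
case: (big_omax_pos hr) => x xE hx.
have wx : w x = w (ed k).
  move: xE heE; rewrite !inE => /andP[_ /eqP e1] /andP[_ /eqP e2].
  by move: e1; rewrite -e2 => -[].
have hBk : Bval w (Ab k) (Tb k) (E k) = Some (w (ed k)).
  by move: heE; rewrite inE => /andP[_ /eqP <-].
have h1 : olt (Some (w (ed k))) (Bval w (Ab k) (Tb k) (E k :\ x)).
  move: hx; rewrite -wx; case: (Bval _ _ _ _) => //= c.
  by rewrite subr_gt0.
have h2 := hmax x; rewrite xE /= in h2.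
have h3 := olt_ole_trans h1 h2.
case Pe: (P (ed k)) => //; exfalso.
have hin' := inP_del (negbT Pe) hin.
apply: (olt_oleF h3); apply: ole_trans (Bval_le hin') _.
rewrite /= (le_trans (bval_sub _ (subD1set _ _))) //.
by move: hle; rewrite hBk.
Qed.


Lemma inP_stage P k : full P -> (forall m, (m < k)%N -> P (ed m)) ->
  inP (Ab k) (Tb k) (E k) P.
Proof.
move=> hf hp; apply/andP; split.
- apply/forallP => j; apply/implyP => jT.
  case: (full_col j hf) => i0 hi0.
  have i0A : i0 \in Ab k.
    apply/negPn/negP => /notinA [m mk e].
    have hm := hp m mk.
    have ej : j = (ed m).2.
      by apply: (full_rowuniq hf hi0); rewrite -e -surjective_pairing.
    by move: jT; rewrite ej (negbTE (Tb_out mk)).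
  apply/eqP; apply: (@sum_eq1 _ (fun i => (i, j) \in E k) (fun i => P (i, j)) i0).
  + by rewrite in_setX i0A jT.
  + exact: hi0.
  + by move=> b _ hb; apply: (full_coluniq hf hb hi0).
- apply/forallP => i; apply/implyP => iA.
  apply: (@sum_le1 _ (fun j => (i, j) \in E k) (fun j => P (i, j))).
  by move=> a b _ ha _ hb; apply: (full_rowuniq hf ha hb).
Qed.

Lemma outside P k x : full P -> (forall m, (m < k)%N -> P (ed m)) -> P x ->
  x \notin E k -> exists2 m, (m < k)%N & x = ed m.
Proof.
move=> hf hp; case: x => i j Px; rewrite in_setX negb_and => /orP [].
- case/notinA => m mk e; exists m => //.
  have hm := hp m mk.
  have ej : j = (ed m).2.
    by apply: (full_rowuniq hf Px); rewrite -e -surjective_pairing.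
  by rewrite ej -e -surjective_pairing.
- case/notinT => m mk e; exists m => //.
  have hm := hp m mk.
  have ei : i = (ed m).1.
    by apply: (full_coluniq hf Px); rewrite -e -surjective_pairing.
  by rewrite ei -e -surjective_pairing.
Qed.

Lemma Pchar P k i : full P -> P (ed k) -> P (i, (ed k).2) = (i == (ed k).1).
Proof.
move=> hf hk; case: eqP => [->|ne]; first by rewrite -surjective_pairing.
apply/negP => hi; apply: ne; apply: (full_coluniq hf hi).
by rewrite -surjective_pairing.
Qed.

Lemma full_eq P1 P2 : full P1 -> full P2 -> (forall k, (k < n)%N -> P1 (ed k)) ->
  (forall k, (k < n)%N -> P2 (ed k)) -> P1 = P2.
Proof.
move=> f1 f2 h1 h2; apply/ffunP => -[i j].
case: (cover j) => k kn <-.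
by rewrite (Pchar i f1 (h1 k kn)) (Pchar i f2 (h2 k kn)).
Qed.

Let r := fun a b : R => b <= a.
Lemma r_trans : transitive r.
Proof. by move=> y x z hxy hyz; rewrite /r (le_trans hyz hxy). Qed.
Lemma r_total : total r.
Proof. by move=> x y; rewrite /r le_total. Qed.

Lemma inv P k : full P -> (k < n)%N ->
  (forall j, (j < k)%N -> P (ed j) /\ nth 0 (sorted_weights w P) j = w (ed j)) ->
  nth 0 (sorted_weights w P) k = bval w (E k) P.
Proof.
move=> hf kn hpre.
have hp : forall m, (m < k)%N -> P (ed m) by move=> m /hpre [].
set s := sorted_weights w P.
set Sk := [set x | P x & x \in E k].
have perm1 : perm_eq (enum [set x | P x]) (map ed (iota 0 k) ++ enum Sk).
  apply: uniq_perm; first exact: enum_uniq.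
    rewrite cat_uniq enum_uniq andbT; apply/andP; split.
      rewrite map_inj_in_uniq ?iota_uniq // => a b; rewrite !mem_iota !add0n => ha hb e.
      by apply: col_inj; [apply: ltn_trans kn | apply: ltn_trans kn | rewrite e].
    apply/hasPn => x; rewrite mem_enum in_set => /andP [_ xE].
    apply/mapP => -[m]; rewrite mem_iota add0n => hm ex.
    by move: xE; rewrite ex (negbTE (ed_notin hm)).
  move=> x; rewrite mem_cat !mem_enum !in_set -memX.
  case Px: (P x) => /=.
    case xE: (x \in E k); first by rewrite orbT.
    case: (outside hf hp Px (negbT xE)) => m mk ->.
    by rewrite map_f // mem_iota add0n.
  rewrite orbF; apply/esym/negbTE/negP => /mapP [m]; rewrite mem_iota add0n => hm e.
  by move: Px; rewrite e hp.
have perm2 : perm_eq s (map w (map ed (iota 0 k)) ++ map w (enum Sk)).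
  by rewrite /s /sorted_weights perm_sort -map_cat perm_map.
have [x0 hx0] : exists x, x \in enum Sk.
  have ek := ed_in kn; move: (ek); rewrite memX => /andP [_ jT].
  have := inP_stage hf hp; case/andP => /forallP /(_ (ed k).2); rewrite jT /=.
  move=> /eqP /sum1_ex [i [hiE hi]]; exists (i, (ed k).2).
  by rewrite mem_enum in_set hi hiE.
have szk : (k < size s)%N.
  rewrite (perm_size perm2) size_cat !size_map size_iota -addn1 leq_add2l.
  by case: (enum Sk) hx0.
have htake : take k s = map w (map ed (iota 0 k)).
  apply: (@eq_from_nth _ 0); first by rewrite size_take szk !size_map size_iota.
  move=> j; rewrite size_take szk => hj; rewrite nth_take // (proj2 (hpre j hj)).
  by rewrite -map_comp (nth_map 0) ?size_iota // nth_iota.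
have hdrop : perm_eq (drop k s) (map w (enum Sk)).
  by rewrite -(perm_cat2l (take k s)) cat_take_drop htake.
have -> : nth 0 s k = nth 0 (drop k s) 0 by rewrite nth_drop addn0.
have hsort : sorted r (drop k s) := drop_sorted k (sort_sorted r_total _).
have sz : (0 < size (drop k s))%N by rewrite size_drop subn_gt0.
move: hdrop hsort sz; case: (drop k s) => [//|h t] hperm hsorted _ /=.
have hall : all (r h) t := order_path_min r_trans hsorted.
have hmem : forall y, y \in h :: t -> y <= h.
  move=> y; rewrite in_cons => /orP [/eqP -> //| yt].
  by move/allP: hall => /(_ y yt).
have hh : h \in map w (enum Sk) by rewrite -(perm_mem hperm) mem_head.
case/mapP: hh => y; rewrite mem_enum in_set => /andP [Py yE] hy.
apply/eqP; rewrite eq_le; apply/andP; split.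
  by have := bval_term P yE; rewrite Py hy.
apply: big_max_le; first by rewrite hy hw.
move=> x xE; case Px: (P x); last by rewrite hy hw.
apply: hmem; rewrite (perm_mem hperm); apply: map_f.
by rewrite mem_enum in_set Px xE.
Qed.


Variable Pst : assignment A T.
Hypothesis hopt : seq_bottleneck_opt w ed Pst.

Lemma Pst_in k : (k < n)%N -> inP (Ab k) (Tb k) (E k) Pst /\
  Bval w (Ab k) (Tb k) (E k) = Some (bval w (E k) Pst).
Proof. by move/hopt; rewrite inE => /andP [h /eqP <-]. Qed.

Lemma Pst_use k : (k < n)%N -> Pst (ed k).
Proof.
move=> kn; case: (Pst_in kn) => h1 h2; apply: (must_use kn h1).
by rewrite h2 /= lexx.
Qed.

Lemma Bval_w k : (k < n)%N -> Bval w (Ab k) (Tb k) (E k) = Some (w (ed k)).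
Proof.
move=> kn; move: (hchoice kn); rewrite /eset; case: ifP => [/cards1P [x Ex] _|_].
  have ek := ed_in kn.
  have exk : x = ed k by move: ek; rewrite Ex in_set1 => /eqP.
  case: (Pst_in kn) => _ ->; congr Some.
  have hu := Pst_use kn.
  apply/eqP; rewrite eq_le; apply/andP; split.
    apply: big_max_le; first exact: hw.
    by move=> y; rewrite Ex in_set1 exk => /eqP ->; rewrite hu.
  by have := bval_term Pst ek; rewrite hu.
by rewrite inE => /andP []; rewrite inE => /andP [_ /eqP <-].
Qed.

Lemma bval_w k : (k < n)%N -> bval w (E k) Pst = w (ed k).
Proof.
move=> kn; have := Bval_w kn; case: (Pst_in kn) => _ -> [] //.
Qed.

Lemma lex P k : full P -> (k <= n)%N ->
  (forall j, (j < k)%N -> P (ed j) /\ nth 0 (sorted_weights w P) j = w (ed j)) \/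
  (exists l, [/\ (l < k)%N,
      (forall j, (j < l)%N -> w (ed j) = nth 0 (sorted_weights w P) j)
    & w (ed l) < nth 0 (sorted_weights w P) l]).
Proof.
move=> hf; elim: k => [|k IH] hk; first by left.
have kn : (k < n)%N := hk.
case: (IH (ltnW hk)) => [H|[l [lk h1 h2]]]; last first.
  by right; exists l; split => //; apply: ltnW.
have hp : forall m, (m < k)%N -> P (ed m) by move=> m /H [].
have hin := inP_stage hf hp.
have hnth := inv hf kn H.
have hBk := Bval_w kn.
have hle : w (ed k) <= bval w (E k) P by have := Bval_le hin; rewrite hBk.
move: hle; rewrite le_eqVlt => /orP [/eqP heq | hlt].
  left => j; rewrite ltnS leq_eqVlt => /orP [/eqP -> | /H //].
  split; last by rewrite hnth.
  by apply: (must_use kn hin); rewrite hBk -heq /= lexx.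
right; exists k; split => //; last by rewrite hnth.
by move=> j /H [_ ->].
Qed.

Lemma core (hn : (0 < n)%N) :
  [/\ full Pst,
     (forall k, (k.+1 < n)%N -> w (ed k.+1) <= w (ed k)),
     (forall P', full P' -> P' != Pst ->
        exists l, [/\ (l < n)%N,
          (forall j, (j < l)%N -> w (ed j) = nth 0 (sorted_weights w P') j)
        & w (ed l) < nth 0 (sorted_weights w P') l])
   & (forall j, (j < n)%N -> nth 0 (sorted_weights w Pst) j = w (ed j))].
Proof.
have hfull : full Pst := (Pst_in hn).1.
split => //.
- move=> k hk; rewrite -(bval_w hk) -(bval_w (ltnW hk)).
  by apply: bval_sub; apply: E_sub.
- move=> P' hf ne; case: (lex hf (leqnn n)) => [H|[l [ln h1 h2]]]; last by exists l.
  exfalso; move/eqP: ne; apply; apply: full_eq => //; first by move=> k /H [].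
  exact: Pst_use.
- suff : forall k, (k <= n)%N -> forall j, (j < k)%N ->
      nth 0 (sorted_weights w Pst) j = w (ed j) by move/(_ n (leqnn n)).
  elim=> [//|k IH] hk j; rewrite ltnS leq_eqVlt => /orP [/eqP -> | hj].
    rewrite (inv hfull hk) ?bval_w // => m hm; split.
      by apply: Pst_use; apply: ltn_trans hk.
    by apply: (IH (ltnW hk)).
  exact: (IH (ltnW hk)).
Qed.

End Main.

Theorem mainTheorem4 (R : realFieldType) (A T : finType) (w : A * T -> R)
  (hA : (1 < #|A|)%N) (hT : (1 <= #|T|)%N) (hTA : (#|T| <= #|A|)%N)
  (hw : forall x, (0 <= w x)%R)
  (ed : nat -> A * T) (Pst : assignment A T)
  (hchoice : valid_choices w ed)
  (hmu : margins_pos w ed)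
  (hopt : seq_bottleneck_opt w ed Pst) :
  [/\ inP [set: A] [set: T] (setX [set: A] [set: T]) Pst,
      (forall k, (k.+1 < #|T|)%N -> (w (ed k.+1) <= w (ed k))%R),
      (forall P' : assignment A T,
          inP [set: A] [set: T] (setX [set: A] [set: T]) P' -> P' != Pst ->
          exists l, [/\ (l < #|T|)%N,
            (forall k, (k < l)%N -> w (ed k) = nth 0%R (sorted_weights w P') k)
            & (w (ed l) < nth 0%R (sorted_weights w P') l)%R])
    & (forall (ed' : nat -> A * T) (P2 : assignment A T),
          valid_choices w ed' -> margins_pos w ed' ->
          seq_bottleneck_opt w ed' P2 ->
          (forall k, (k < #|T|)%N -> w (ed' k) = w (ed k)) /\ P2 = Pst)].
Proof.
have hn : (0 < #|T|)%N := hT.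
case: (core hw hchoice hmu hopt hn) => hf1 hmono hlex hnth1.
split => // ed' P2 hc2 hm2 ho2.
case: (core hw hc2 hm2 ho2 hn) => hf2 _ hlex2 hnth2.
case: (eqVneq P2 Pst) => [e|ne].
  subst P2; split => // k hk; by rewrite -(hnth2 k hk) (hnth1 k hk).
exfalso.
case: (hlex P2 hf2 ne) => l [ln h1 s1].
have ne' : Pst != P2 by rewrite eq_sym.
case: (hlex2 Pst hf1 ne') => l' [ln' h2 s2].
rewrite (hnth2 l ln) in s1; rewrite (hnth1 l' ln') in s2.
case: (ltngtP l l') => hll.
- have := h2 l hll; rewrite (hnth1 l ln) => e.
  by move: s1; rewrite e ltxx.
- have := h1 l' hll; rewrite (hnth2 l' ln') => e.
  by move: s2; rewrite e ltxx.
- subst l'; have := lt_trans s1 s2; by rewrite ltxx.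
Qed.
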